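(* Let $P(s,h)=\{p_1,\dots,p_m\}$ and $P(h,t)=\{p'_1,\dots,p'_n\}$ be skyline path sets with $p_i=(w_i,c_i)$, $p'_j=(w'_j,c'_j)$, each sorted in weight-increasing order, let $p_i^j=(w_i+w'_j,c_i+c'_j)$ and $P_c=\{p_k^l:1\le k\le m,1\le l\le n\}$. Fix $i,j$ and let $P_3=\{p_k^l: k<i,\ l>j\}$ and $P_4=\{p_k^l: k>i,\ l<j\}$. Then $p_i^j$ is a skyline path of $P_c$ (not dominated by any path of $P_c$) if and only if it is not dominated by any path in $P_3\cup P_4$.
   Context: A path with value $(w,c)$ dominates a path with value $(w',c')$ if $w\le w'$, $c\le c'$, and at least one inequality is strict. A skyline path set is a set of paths no one of which dominates another (so, in two dimensions, when sorted by increasing weight the costs are non-increasing). Concatenation adds weights and costs. *)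

(* Defs.v *)
From mathcomp Require Import all_boot all_order all_algebra.
Set Implicit Arguments. Unset Strict Implicit. Unset Printing Implicit Defensive.
Import Order.TTheory GRing.Theory Num.Theory.
Local Open Scope ring_scope.


Definition dominates (R : realDomainType) (p q : R * R) : bool :=
  [&& p.1 <= q.1, p.2 <= q.2 & (p.1 < q.1) || (p.2 < q.2)].

Definition concat_path (R : realDomainType) (p q : R * R) : R * R :=
  (p.1 + q.1, p.2 + q.2).

Definition skyline_sorted (R : realDomainType) (s : seq (R * R)) : Prop :=
  [/\ uniq s,
      (forall p q, p \in s -> q \in s -> ~~ dominates p q)
    & sorted (fun p q : R * R => p.1 <= q.1) s].

(* Main.v *)
Require Import Defs.
From mathcomp Require Import all_boot all_order all_algebra.
From mathcomp Require Import lra.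
Import Order.TTheory GRing.Theory Num.Theory.
Local Open Scope ring_scope.

Lemma key (R : realDomainType) (s : seq (R * R)) k i :
  skyline_sorted s -> (k < i)%N -> (i < size s)%N ->
  (nth (0,0) s k).1 < (nth (0,0) s i).1 /\ (nth (0,0) s i).2 < (nth (0,0) s k).2.
Proof.
case=> u nd so ki isz.
have ksz : (k < size s)%N by apply: ltn_trans isz.
have hw : (nth (0,0) s k).1 <= (nth (0,0) s i).1.
  apply: (sorted_leq_nth (leT := fun p q : R * R => p.1 <= q.1)).
  - by move=> x y z /= h1 h2; apply: le_trans h1 h2.
  - by move=> x /=.
  - exact: so.
  - by rewrite inE.
  - by rewrite inE.
  - exact: (ltnW ki).
have hne : nth (0,0) s k != nth (0,0) s i by rewrite nth_uniq // neq_ltn ki.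
have d1 := nd _ _ (mem_nth (0,0) ksz) (mem_nth (0,0) isz).
have d2 := nd _ _ (mem_nth (0,0) isz) (mem_nth (0,0) ksz).
move: hne d1 d2 hw; rewrite /dominates.
case: (nth (0,0) s k) => a b; case: (nth (0,0) s i) => c d /= hne d1 d2 hw.
have hc : d < b.
  rewrite ltNge; apply/negP => hbd.
  move: d1; rewrite hw hbd /= negb_or !lt_def hw hbd !andbT !negbK => /andP[/eqP e1 /eqP e2].
  by move: hne; rewrite e1 e2 eqxx.
split => //.
rewrite lt_def hw andbT; apply/negP => /eqP hac.
by move: d2; rewrite hac lexx (ltW hc) hc orbT.
Qed.

Theorem mainTheorem4 (R : realDomainType) (s1 s2 : seq (R * R)) (i j : nat) :
  skyline_sorted s1 -> skyline_sorted s2 ->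
  (i < size s1)%N -> (j < size s2)%N ->
  let pc := fun k l => concat_path (nth (0, 0) s1 k) (nth (0, 0) s2 l) in
  (forall k l, (k < size s1)%N -> (l < size s2)%N -> ~~ dominates (pc k l) (pc i j))
  <->
  (forall k l, (k < size s1)%N -> (l < size s2)%N ->
     (((k < i)%N /\ (j < l)%N) \/ ((i < k)%N /\ (l < j)%N)) ->
     ~~ dominates (pc k l) (pc i j)).
Proof.
move=> h1 h2 isz jsz pc; split=> H k l ksz lsz; first by move=> _; apply: H.
have E : forall k l, pc k l = concat_path (nth (0, 0) s1 k) (nth (0, 0) s2 l) by [].
case: (ltngtP k i) => ki; case: (ltngtP l j) => lj;
  try (apply: H => //; by [left | right]);
  rewrite /dominates !E /concat_path /=;
  try (have [A1 A2] := @key _ _ _ _ h1 ki isz);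
  try (have [A1 A2] := @key _ _ _ _ h1 ki ksz);
  try (have [B1 B2] := @key _ _ _ _ h2 lj jsz);
  try (have [B1 B2] := @key _ _ _ _ h2 lj lsz);
  try rewrite ki; try rewrite lj;
  apply/negP; case/and3P => C1 C2 /orP [C3|C3].
all: clear H E ki lj ksz lsz isz jsz h1 h2; lra.
Qed.
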